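(* For every Hessenberg function $h$ on $\{1,\dots,n\}$, the $\mathbb{Q}$-linear extension $\Phi:M^{h,(n)}\to\operatorname{span}_{\mathbb{Q}}\mathcal{A}_h((n))$ is an isomorphism of graded vector spaces; equivalently, $\Phi$ is a degree-preserving bijection from the set of $(h,(n))$-fillings onto $\mathcal{A}_h((n))=\mathcal{B}_h$.
   Context: A Hessenberg function is $h:\{1,\dots,n\}\to\{1,\dots,n\}$, $h_i=h(i)$, with $i\le h_i$ and $h_i\le h_{i+1}$; degree tuple $\beta_i=i-\#\{k:h_k<i\}$; $\mathcal{B}_h=\{x_1^{\alpha_1}\cdots x_n^{\alpha_n}:0\le\alpha_i\le\beta_i-1\}$. An $(h,(n))$-filling is a permutation $T=w_1\cdots w_n$ of $1,\dots,n$ in one row with $w_t\le h(w_{t+1})$ for all $t$. A dimension pair of $T$ is $(a,b)$ with $b>a$, $b$ to the left of $a$, and, if $a$ is immediately followed by $c$, $b\le h(c)$. $\Phi(T)=\prod_{j=2}^n x_j^{|D^T_j|}$ with $D^T_j$ the set of dimension pairs $(a,j)$; $\mathcal{A}_h((n))$ is the set of all $\Phi(T)$. $M^{h,(n)}$ is the formal $\mathbb{Q}$-span of the $(h,(n))$-fillings, graded by number of dimension pairs; the span of monomials is graded by degree. *)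

(* Defs.v *)
(* Everything is 1-based: values 1..n, fillings are seq nat. *)
From mathcomp Require Import all_boot.
Set Implicit Arguments. Unset Strict Implicit. Unset Printing Implicit Defensive.

(* Hessenberg function on {1,...,n}; values of h outside {1..n} are irrelevant. *)
Definition hessenberg (n : nat) (h : nat -> nat) : Prop :=
  (forall i, 1 <= i <= n -> i <= h i <= n) /\
  (forall i, 1 <= i < n -> h i <= h i.+1).

Definition beta (n : nat) (h : nat -> nat) (i : nat) : nat :=
  i - count (fun k => h k < i) (iota 1 n).

(* Monomials x_1^{a_1}...x_n^{a_n} are represented by their exponent vectors
   [:: a_1; ...; a_n].  B_h = exponent vectors with 0 <= a_i <= beta_i - 1. *)
Definition in_Bh (n : nat) (h : nat -> nat) (a : seq nat) : bool :=
  (size a == n) && all (fun i => nth 0 a i.-1 < beta n h i) (iota 1 n).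

Definition filling (n : nat) (h : nat -> nat) (T : seq nat) : bool :=
  perm_eq T (iota 1 n) && sorted (fun x y => x <= h y) T.

Definition dim_pair (h : nat -> nat) (T : seq nat) (a b : nat) : bool :=
  [&& a \in T, b \in T, a < b, index b T < index a T &
      ((index a T).+1 < size T) ==> (b <= h (nth 0 T (index a T).+1))].

Definition Dcard (h : nat -> nat) (T : seq nat) (j : nat) : nat :=
  count (fun a => dim_pair h T a j) T.

(* total number of dimension pairs of T (grading of M^{h,(n)}) *)
Definition num_dim_pairs (h : nat -> nat) (T : seq nat) : nat :=
  sumn [seq count (fun a => dim_pair h T a b) T | b <- T].

Definition Phi (n : nat) (h : nat -> nat) (T : seq nat) : seq nat :=
  [seq (if j == 1 then 0 else Dcard h T j) | j <- iota 1 n].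

(* Main.v *)
Require Import Defs.
From mathcomp Require Import all_boot.

Definition hvv (h : nat -> nat) (j : nat) (R : seq nat) : bool :=
  if R is b :: _ then j <= h b else true.

Fixpoint Dr (h : nat -> nat) (j : nat) (R : seq nat) : nat :=
  match R with
  | [::] => 0
  | a :: R' => ((a < j) && hvv h j R') + Dr h j R'
  end.

Lemma Dr_gen h j R : all (fun a => a < j) R ->
  Dr h j R = count (fun y => j <= h y) (behead R) + (R != [::]).
Proof.
elim: R => [|a R IH] //= /andP [-> HR].
rewrite IH //; case: R {IH HR} => [|b R] //=.
by rewrite addnA.
Qed.

Lemma Dr_count h j R : all (fun a => a < j) R -> hvv h j R ->
  Dr h j R = count (fun y => j <= h y) R.
Proof.
move=> HA; rewrite Dr_gen //; case: R HA => [|b R] //= _ ->.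
by rewrite addn1 add1n.
Qed.

Lemma Dr_ins h i j X R : i < j -> i <= h j -> hvv h i R ->
  Dr h i (X ++ j :: R) = Dr h i (X ++ R).
Proof.
move=> Hij Hhj HR; elim: X => [|x X IH] /=.
  by rewrite ltnNge (ltnW Hij).
rewrite IH; congr (_ + _); congr (_ && _).
by case: X {IH} => [|y X] //=; rewrite Hhj HR.
Qed.

Lemma Dcard_aux h T i R : forall Y, T = Y ++ R -> uniq T -> i \in Y ->
  count (fun a => dim_pair h T a i) R = Dr h i R.
Proof.
elim: R => [|a R IH] Y HT HU HiY //=.
rewrite (IH (rcons Y a)); last first.
- by rewrite mem_rcons in_cons HiY orbT.
- by [].
- by rewrite cat_rcons.
congr (_ + _).
have HaY : a \notin Y.
  move: HU; rewrite HT cat_uniq => /and3P [_ /hasPn H _].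
  by apply: H; rewrite in_cons eqxx.
rewrite /dim_pair HT !mem_cat in_cons eqxx orbT HiY /=.
rewrite !index_cat HiY (negbTE HaY) /= eqxx addn0 index_mem HiY /=.
rewrite size_cat /= nth_cat.
have -> : (size Y).+1 < size Y = false by rewrite ltnNge ltnW.
rewrite subSnn.
case: R {IH HT} => [|b R] /=.
  by rewrite addn1 ltnn.
by rewrite -[(size Y).+1]addn1 ltn_add2l.
Qed.

Lemma DcardE h T X i R : uniq T -> T = X ++ i :: R -> Dcard h T i = Dr h i R.
Proof.
move=> HU HT; rewrite /Dcard [in X in count _ X]HT -cat_rcons count_cat.
rewrite (@Dcard_aux h T i R (rcons X i)) ?cat_rcons ?mem_rcons ?in_cons ?eqxx //.
rewrite (eq_in_count (a2 := pred0)) ?count_pred0 //.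
have HiX : i \notin X.
  move: HU; rewrite HT cat_uniq => /and3P [_ /hasPn H _].
  by apply: H; rewrite in_cons eqxx.
move=> a; rewrite mem_rcons in_cons => /orP [/eqP -> | HaX] /=.
  by rewrite /dim_pair ltnn !andbF.
rewrite /dim_pair HT !index_cat HaX (negbTE HiX) /= eqxx addn0.
have -> : size X < index a X = false by rewrite ltnNge ltnW // index_mem.
by rewrite !andbF.
Qed.

Definition rel_h (h : nat -> nat) : rel nat := fun x y => x <= h y.

Lemma sorted_ins h j L R : all (fun x => x < j) L -> j <= h j ->
  sorted (rel_h h) (L ++ j :: R) = sorted (rel_h h) (L ++ R) && hvv h j R.
Proof.
move=> HL Hj; case: L HL => [|x L] /=.
  by move=> _; case: R => [|b R] //=; rewrite andbC.
move=> /andP [Hx HL].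
rewrite !cat_path /=.
have Hl : last x L < j.
  have := mem_last x L; rewrite in_cons => /orP [/eqP -> //|].
  by move/(allP HL).
have -> : rel_h h (last x L) j by rewrite /rel_h (leq_trans (ltnW Hl) Hj).
case: R => [|b R] /=; first by rewrite !andbT.
rewrite /rel_h; case E : (j <= h b).
  by rewrite (leq_trans (ltnW Hl) E) !andbT.
by rewrite !andbF.
Qed.

Lemma iotaSr m : iota 1 m.+1 = rcons (iota 1 m) m.+1.
Proof. by have := iotaD 1 m 1; rewrite addn1 add1n cats1. Qed.

Lemma perm_ins m L R :
  perm_eq (L ++ m.+1 :: R) (iota 1 m.+1) = perm_eq (L ++ R) (iota 1 m).
Proof.
rewrite iotaSr -cats1 perm_sym perm_catC /= perm_sym.
by rewrite -[m.+1 :: R]cat1s perm_catCA /= perm_cons.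
Qed.

Lemma hess_ge n h i : hessenberg n h -> 1 <= i <= n -> i <= h i.
Proof. by case=> H _ Hi; case/andP: (H i Hi). Qed.

Lemma fil_split n h m S : hessenberg n h -> m < n -> filling m.+1 h S ->
  exists L R, [/\ S = L ++ m.+1 :: R, filling m h (L ++ R) & hvv h m.+1 R].
Proof.
move=> Hh Hmn /andP [HP HS].
have Hin : m.+1 \in S by rewrite (perm_mem HP) mem_iota ltnS leqnn andbT.
move: HP HS; case/splitPr: Hin => L R HP HS.
rewrite perm_ins in HP.
have HL : all (fun x => x < m.+1) L.
  apply/allP => x Hx.
  have : x \in iota 1 m by rewrite -(perm_mem HP) mem_cat Hx.
  by rewrite mem_iota add1n => /andP [_ ->].
have Hj : m.+1 <= h m.+1 by apply: (@hess_ge n h _ Hh); rewrite ltnS Hmn.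
move: HS; rewrite (@sorted_ins h m.+1 L _ HL Hj) => /andP [HS HR].
by exists L, R; split => //; rewrite /filling HP.
Qed.

Lemma fil_join n h m L R : hessenberg n h -> m < n -> filling m h (L ++ R) ->
  hvv h m.+1 R -> filling m.+1 h (L ++ m.+1 :: R).
Proof.
move=> Hh Hmn /andP [HP HS] HR.
have HL : all (fun x => x < m.+1) L.
  apply/allP => x Hx.
  have : x \in iota 1 m by rewrite -(perm_mem HP) mem_cat Hx.
  by rewrite mem_iota add1n => /andP [_ ->].
have Hj : m.+1 <= h m.+1 by apply: (@hess_ge n h _ Hh); rewrite ltnS Hmn.
rewrite /filling perm_ins HP /=.
have -> : (fun x y => x <= h y) = rel_h h by [].
by rewrite (@sorted_ins h m.+1 L _ HL Hj) HS HR.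
Qed.

Definition code (h : nat -> nat) (m : nat) (S : seq nat) : seq nat :=
  map (Dcard h S) (iota 1 m).

Lemma code_join n h m L R : hessenberg n h -> m < n -> filling m h (L ++ R) ->
  hvv h m.+1 R ->
  code h m.+1 (L ++ m.+1 :: R) =
  rcons (code h m (L ++ R)) (count (fun y => m.+1 <= h y) R).
Proof.
move=> Hh Hmn HF HR.
have HF' := @fil_join n h m L R Hh Hmn HF HR.
case/andP: HF => HP _; case/andP: HF' => HP' _.
have HU : uniq (L ++ R) by rewrite (perm_uniq HP) iota_uniq.
have HU' : uniq (L ++ m.+1 :: R) by rewrite (perm_uniq HP') iota_uniq.
have Hj : m.+1 <= h m.+1 by apply: (@hess_ge n h _ Hh); rewrite ltnS Hmn.
rewrite /code iotaSr map_rcons.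
congr rcons.
  apply/eq_in_map => i Hi.
  have Him : i < m.+1 by move: Hi; rewrite mem_iota add1n => /andP [_ ->].
  move: Hi; rewrite -(perm_mem HP) mem_cat => /orP [] Hi.
    move: HU HU'; case/splitPr: Hi => L1 L2 HU HU'.
    rewrite (@DcardE h _ L1 i (L2 ++ m.+1 :: R) HU'); last by rewrite -catA.
    rewrite (@DcardE h _ L1 i (L2 ++ R) HU); last by rewrite -catA.
    apply: Dr_ins => //; first exact: leq_trans (ltnW Him) Hj.
    by case: R HR {HU HU' HP HP'} => [|b R] //=; apply: leq_trans (ltnW Him).
  move: HU HU'; case/splitPr: Hi => R1 R2 HU HU'.
  rewrite (@DcardE h _ (L ++ m.+1 :: R1) i R2 HU'); last by rewrite -catA.
  by rewrite (@DcardE h _ (L ++ R1) i R2 HU); last by rewrite -catA.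
rewrite (@DcardE h _ L m.+1 R HU' (erefl _)) Dr_count //.
apply/allP => x Hx.
have : x \in iota 1 m by rewrite -(perm_mem HP) mem_cat Hx orbT.
by rewrite mem_iota add1n => /andP [_ ->].
Qed.

Lemma suffix_exists h j s x : x <= count (fun y => j <= h y) s ->
  exists L R, [/\ s = L ++ R, hvv h j R & count (fun y => j <= h y) R = x].
Proof.
elim: s x => [|y s IH] x /=.
  by rewrite leqn0 => /eqP ->; exists [::], [::].
case: (leqP x (count (fun y => j <= h y) s)) => Hx Hle.
  by case: (IH x Hx) => L [R [-> HR Hc]]; exists (y :: L), R.
exists [::], (y :: s); split => //=.
  by case E : (j <= h y) => //; move: Hle; rewrite E add0n leqNgt Hx.
case E : (j <= h y) Hle => /=; last by rewrite add0n leqNgt Hx.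
by rewrite add1n => Hle; apply/eqP; rewrite eqn_leq Hle Hx.
Qed.

Lemma cat_split_aux (L1 L2 R1 R2 : seq nat) : L1 ++ R1 = L2 ++ R2 ->
  size L1 <= size L2 -> exists X, L2 = L1 ++ X /\ R1 = X ++ R2.
Proof.
elim: L1 L2 => [|a L1 IH] L2 /=; first by move=> ->; exists L2.
case: L2 => [|b L2] //= [-> Heq] Hs.
by case: (IH L2 Heq Hs) => X [-> ->]; exists X.
Qed.

Lemma suffix_unique h j L1 R1 L2 R2 : L1 ++ R1 = L2 ++ R2 ->
  hvv h j R1 -> hvv h j R2 ->
  count (fun y => j <= h y) R1 = count (fun y => j <= h y) R2 ->
  L1 = L2 /\ R1 = R2.
Proof.
wlog Hs : L1 R1 L2 R2 / size L1 <= size L2.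
  move=> W; case: (leqP (size L1) (size L2)) => Hs; first exact: W.
  move=> E H1 H2 C; have [] := W L2 R2 L1 R1 (ltnW Hs) (esym E) H2 H1 (esym C).
  by move=> -> ->.
move=> E H1 H2 C; case: (@cat_split_aux L1 L2 R1 R2 E Hs) => X [HL HR].
case: X HL HR => [|x X] HL HR; first by rewrite HL HR cats0.
move: H1 C; rewrite HR /= count_cat => ->.
by rewrite add1n -addSn -{2}[count _ R2]add0n => /addIn.
Qed.

Definition cnt (h : nat -> nat) (i : nat) : nat :=
  count (fun k => i <= h k) (iota 1 i.-1).

Definition inB (h : nat -> nat) (m : nat) (a : seq nat) : bool :=
  (size a == m) && all (fun i => nth 0 a i.-1 <= cnt h i) (iota 1 m).

Lemma inB_rcons h m a x :
  inB h m.+1 (rcons a x) = inB h m a && (x <= cnt h m.+1).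
Proof.
rewrite /inB size_rcons eqSS iotaSr all_rcons nth_rcons.
case: eqP => Ha //=.
rewrite Ha ltnn eqxx andbC.
congr andb; apply/eq_in_all => i; rewrite mem_iota add1n => /andP [H1 H2].
by rewrite nth_rcons Ha prednK //; move: H2; rewrite ltnS => ->.

Qed.

Arguments fil_split {n h m S}. Arguments fil_join {n h m L R}.
Arguments code_join {n h m L R}. Arguments suffix_unique {h j L1 R1 L2 R2}.
Arguments suffix_exists {h j s x}.

Lemma count_fil h m S : filling m h S ->
  count (fun y => m.+1 <= h y) S = cnt h m.+1.
Proof. by case/andP => HP _; rewrite /cnt /= (permP HP). Qed.
Arguments count_fil {h m S}.

Lemma main_ind n h : hessenberg n h -> forall m, m <= n ->
  [/\ forall S, filling m h S -> inB h m (code h m S),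
      forall S1 S2, filling m h S1 -> filling m h S2 ->
        code h m S1 = code h m S2 -> S1 = S2
    & forall a, inB h m a -> exists2 S, filling m h S & code h m S = a].
Proof.
move=> Hh; elim=> [|m IH] Hmn.
  have E : forall S, filling 0 h S -> S = [::].
    by move=> S /andP [HP _]; apply: size0nil; rewrite (perm_size HP).
  split.
  - by move=> S /E ->.
  - by move=> S1 S2 /E -> /E ->.
  - move=> a /andP [/eqP Ha _]; exists [::] => //.
    by rewrite (size0nil Ha).
have Hlt : m < n by [].
case: (IH (ltnW Hmn)) => IA IB IC.
split.
- move=> S /(fil_split Hh Hlt) [L [R [-> HF HR]]].
  rewrite (code_join Hh Hlt HF HR) inB_rcons IA //=.
  by rewrite -(count_fil HF) count_cat leq_addl.
- move=> S1 S2 /(fil_split Hh Hlt) [L1 [R1 [-> HF1 HR1]]].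
  move=> /(fil_split Hh Hlt) [L2 [R2 [-> HF2 HR2]]].
  rewrite (code_join Hh Hlt HF1 HR1) (code_join Hh Hlt HF2 HR2).
  move/eqP; rewrite eqseq_rcons => /andP [/eqP Hc /eqP Hn].
  have := IB _ _ HF1 HF2 Hc => E.
  by case: (suffix_unique E HR1 HR2 Hn) => -> ->.
- move=> a; case/lastP: a => [|a x]; first by case/andP.
  rewrite inB_rcons => /andP [Ha Hx].
  case: (IC a Ha) => S' HF Hc.
  rewrite -(count_fil HF) in Hx.
  case: (suffix_exists Hx) => L [R [HS HR Hcnt]].
  rewrite HS in HF Hc.
  exists (L ++ m.+1 :: R); first exact: fil_join Hh Hlt HF HR.
  by rewrite (code_join Hh Hlt HF HR) Hc Hcnt.
Qed.

Lemma Phi_code n h T : filling n h T -> Phi n h T = code h n T.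
Proof.
case/andP => HP _; rewrite /Phi /code; apply/eq_in_map => j Hj.
case: eqP => // ->; rewrite /Dcard (eq_in_count (a2 := pred0)) ?count_pred0 //.
move=> a; rewrite (perm_mem HP) mem_iota => /andP [Ha _].
by rewrite /dim_pair ltnNge Ha /= !andbF.
Qed.

Lemma beta_eq n h i : hessenberg n h -> 1 <= i <= n -> beta n h i = (cnt h i).+1.
Proof.
move=> Hh /andP [H1 H2].
have Hin : i.-1 <= n by rewrite (leq_trans (leq_pred i)).
rewrite /beta -(subnKC Hin) iotaD count_cat.
have -> : count (fun k => h k < i) (iota (1 + i.-1) (n - i.-1)) = 0.
  apply/eqP; rewrite -leqn0 leqNgt -has_count; apply/hasPn => k.
  rewrite add1n prednK // mem_iota -[X in _ < X + _](prednK H1) addSn subnKC //.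
  rewrite ltnS => /andP [Hk1 Hk2].
  rewrite -leqNgt (leq_trans Hk1) //; apply: (@hess_ge n h _ Hh).
  by rewrite Hk2 andbT (leq_trans H1 Hk1).
have Hc := count_predC (fun k => i <= h k) (iota 1 i.-1).
rewrite size_iota (@eq_count _ (predC (fun k => i <= h k)) (fun k => h k < i)) in Hc;
  last by move=> k /=; rewrite ltnNge.
rewrite addn0 /cnt -{1}(prednK H1) -{1}Hc -addSn addnK.
by [].
Qed.

Lemma inBh_eq n h a : hessenberg n h -> in_Bh n h a = inB h n a.
Proof.
move=> Hh; rewrite /in_Bh /inB; congr andb; apply/eq_in_all => i.
rewrite mem_iota add1n ltnS => Hi.
by rewrite (@beta_eq n h i Hh Hi) ltnS.
Qed.

Theorem mainTheorem19 (n : nat) (h : nat -> nat) :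
  hessenberg n h ->
  (* Phi is injective on (h,(n))-fillings *)
  (forall T1 T2, filling n h T1 -> filling n h T2 ->
     Phi n h T1 = Phi n h T2 -> T1 = T2) /\
  (* A_h((n)) = B_h *)
  (forall T, filling n h T -> in_Bh n h (Phi n h T)) /\
  (forall a, in_Bh n h a -> exists2 T, filling n h T & Phi n h T = a) /\
  (* degree preserving *)
  (forall T, filling n h T -> sumn (Phi n h T) = num_dim_pairs h T).
Proof.
move=> Hh; case: (@main_ind n h Hh n (leqnn n)) => IA IB IC.
split.
  by move=> T1 T2 H1 H2; rewrite !Phi_code //; apply: IB.
split.
  by move=> T HT; rewrite Phi_code // inBh_eq // IA.
split.
  move=> a; rewrite inBh_eq // => Ha; case: (IC a Ha) => T HT HC.
  by exists T => //; rewrite Phi_code.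
move=> T HT; rewrite Phi_code // /code /num_dim_pairs.
case/andP: HT => HP _.
by apply: perm_sumn; apply: perm_map; rewrite perm_sym.
Qed.
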